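(* Let $X_1,\dots,X_n$ be real-valued random variables and let $f_1,\dots,f_M$ be (entrywise) non-decreasing functions on $\mathbb R^n$. For each $j\in\{1,\dots,M\}$ let $Y_j=f_j(X_1,\dots,X_n)$. If $(X_1,\dots,X_n)\uparrow^{\mathrm{st}}Y_j$, then $(Y_1,\dots,Y_M)$ is PRDS on the subset $\{j\}$.
   Context: For vectors, $x\preceq y$ means $x_i\le y_i$ for all $i$; a function $f$ is non-decreasing if $x\preceq y$ implies $f(x)\le f(y)$. A random vector $X$ is stochastically increasing in a random variable $Y$, written $X\uparrow^{\mathrm{st}}Y$, if the regular conditional probability $\Pr(X\in\cdot\mid Y=y)$ exists and for every bounded non-decreasing function $g$, $y\mapsto\mathbb E[g(X)\mid Y=y]$ is non-decreasing. A set $D\subset\mathbb R^m$ is non-decreasing if $x\preceq y$, $x\in D$ imply $y\in D$. A random vector $Y\in\mathbb R^m$ is PRDS on $T\subset\{1,\dots,m\}$ if $t\mapsto\Pr(Y\in D\mid Y_i=t)$ is non-decreasing for every non-decreasing set $D$ and every $i\in T$. *)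

(* Defs.v *)
From HB Require Import structures.
From mathcomp Require Import all_boot all_order all_algebra.
From mathcomp Require Import all_classical all_reals all_analysis.
From mathcomp Require Import measurable_realfun.
Set Implicit Arguments. Unset Strict Implicit. Unset Printing Implicit Defensive.
Import Order.TTheory GRing.Theory Num.Theory.
Local Open Scope classical_set_scope.
Local Open Scope ring_scope.

(* R^n is represented by n.-tuple R, carrying the library's product
   sigma-algebra (generated by the coordinate projections). *)

Definition vle (R : realType) (n : nat) (x y : n.-tuple R) : Prop :=
  forall i : 'I_n, tnth x i <= tnth y i.

Definition nondecr_fun (R : realType) (n : nat) (g : n.-tuple R -> R) : Prop :=
  forall x y, vle x y -> g x <= g y.

Definition nondecr_set (R : realType) (n : nat) (D : set (n.-tuple R)) : Prop :=
  forall x y, vle x y -> D x -> D y.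

Definition rvec d (T : measurableType d) (R : realType) (n : nat)
  (X : 'I_n -> T -> R) : T -> n.-tuple R := fun t => [tuple X i t | i < n].

Definition is_rcp d (T : measurableType d) (R : realType) (n : nat)
  (P : probability T R) (Z : T -> n.-tuple R) (W : T -> R)
  (k : R -> probability (n.-tuple R) R) : Prop :=
  (forall A : set (n.-tuple R), measurable A -> measurable_fun [set: R] ((fun y => k y A) : R -> \bar R)) /\
  (forall (A : set (n.-tuple R)) (B : set R), measurable A -> measurable B ->
     P (Z @^-1` A `&` W @^-1` B) = (\int[P]_(t in W @^-1` B) k (W t) A)%E).

(* Z is stochastically increasing in W: a regular conditional probability
   exists such that y |-> E[g(Z) | W = y] = ∫ g d(k y) is non-decreasing
   for every bounded (measurable) non-decreasing g. *)
Definition stoch_incr d (T : measurableType d) (R : realType) (n : nat)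
  (P : probability T R) (Z : T -> n.-tuple R) (W : T -> R) : Prop :=
  exists k : R -> probability (n.-tuple R) R, is_rcp P Z W k /\
    forall g : n.-tuple R -> R, measurable_fun setT g ->
      (exists C : R, forall x, `|g x| <= C) -> nondecr_fun g ->
      forall y1 y2 : R, y1 <= y2 ->
        (\int[k y1]_x (g x)%:E <= \int[k y2]_x (g x)%:E)%E.

(* Y (m-dimensional) is PRDS on S ⊂ {1..m}: for each i ∈ S a regular
   conditional probability of Y given Y_i exists such that
   t |-> Pr(Y ∈ D | Y_i = t) is non-decreasing for every (measurable)
   non-decreasing set D. *)
Definition PRDS d (T : measurableType d) (R : realType) (m : nat)
  (P : probability T R) (Y : T -> m.-tuple R) (S : set 'I_m) : Prop :=
  forall i, S i ->
    exists k : R -> probability (m.-tuple R) R,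
      is_rcp P Y (fun t => tnth (Y t) i) k /\
      forall D : set (m.-tuple R), measurable D -> nondecr_set D ->
        forall t1 t2 : R, t1 <= t2 -> (k t1 D <= k t2 D)%E.

(* Main.v *)
Require Import Defs.
From HB Require Import structures.
From mathcomp Require Import all_boot all_order all_algebra.
From mathcomp Require Import all_classical all_reals all_analysis.
From mathcomp Require Import measurable_realfun.
Import Order.TTheory GRing.Theory Num.Theory.
Local Open Scope classical_set_scope.
Local Open Scope ring_scope.
Set Implicit Arguments.

Definition Fm (R : realType) (n M : nat) (f : 'I_M -> n.-tuple R -> R)
  (fm : forall j, measurable_fun setT (f j)) : n.-tuple R -> M.-tuple R :=
  fun x => [tuple f k x | k < M].
Arguments Fm {R n M f} fm.

Lemma Fm_meas (R : realType) (n M : nat) (f : 'I_M -> n.-tuple R -> R)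
  (fm : forall j, measurable_fun setT (f j)) : measurable_fun setT (Fm fm).
Proof.
apply/measurable_fun_tnthP => i.
rewrite /comp /Fm.
have -> : (fun x : n.-tuple R => tnth [tuple f k x | k < M] i) = f i.
  by apply: funext => x; rewrite tnth_mktuple.
exact: fm.
Qed.
Arguments Fm_meas {R n M f} fm.

HB.instance Definition _ (R : realType) (n M : nat) (f : 'I_M -> n.-tuple R -> R)
  (fm : forall j, measurable_fun setT (f j)) :=
  isMeasurableFun.Build _ _ _ _ (Fm fm) (Fm_meas fm).

Theorem theorem3 (d : measure_display) (T : measurableType d) (R : realType)
  (P : probability T R) (n M : nat)
  (X : 'I_n -> {mfun T >-> R})
  (f : 'I_M -> n.-tuple R -> R)
  (f_meas : forall j, measurable_fun setT (f j))
  (f_nd : forall j, nondecr_fun (f j))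
  (j : 'I_M)
  (hSI : stoch_incr P (rvec X) (fun t => f j (rvec X t))) :
  PRDS P (fun t => [tuple f k (rvec X t) | k < M]) [set j].
Proof.
move=> i /= ->{i}.
have [k [[hk1 hk2] hmono]] := hSI.
have mpre : forall A, measurable A -> measurable (Fm f_meas @^-1` A).
  by move=> A mA; rewrite -[X in measurable X]setTI; exact: Fm_meas.
exists (fun y => distribution (k y) (Fm f_meas)).
split; first split.
- move=> A mA; exact: hk1 (mpre A mA).
- move=> A B mA mB.
  have -> : (fun t => tnth [tuple f k0 (rvec X t) | k0 < M] j) =
            (fun t => f j (rvec X t)).
    by apply: funext => t; rewrite tnth_mktuple.
  apply: eq_trans (hk2 _ _ (mpre A mA) mB) _.
  by apply: eq_integral => t _; rewrite tnth_mktuple.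
- move=> D mD nD t1 t2 t12.
  have m1 : measurable_fun setT (\1_(Fm f_meas @^-1` D) : n.-tuple R -> R).
    by apply: measurable_indic; exact: mpre.
  have b1 : exists C : R, forall x, `|(\1_(Fm f_meas @^-1` D) : n.-tuple R -> R) x| <= C.
    exists 1 => x; rewrite /indic; case: (x \in _).
      by rewrite normr1.
    by rewrite normr0.
  have n1 : nondecr_fun (\1_(Fm f_meas @^-1` D) : n.-tuple R -> R).
    move=> x y xy; rewrite /indic.
    have [hx|hx] := boolP (x \in Fm f_meas @^-1` D); last first.
      by case: (y \in _); rewrite ?ler01 ?lexx.
    have hy : y \in Fm f_meas @^-1` D.
      rewrite inE; apply: nD (set_mem hx) => i; rewrite /Fm !tnth_mktuple.
      exact: f_nd.
    by rewrite hy lexx.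
  have := hmono _ m1 b1 n1 t1 t2 t12.
  rewrite integral_indic; last exact: mpre.
  rewrite integral_indic; last exact: mpre.
  by rewrite !setIT.
  exact: measurableT.
  exact: measurableT.
Qed.
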